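(* Consider the spacetime $\mathbb{R}\times\mathbb{R}^3$ with coordinates $(t,x^1,x^2,x^3)$ and metric of signature $(-,+,+,+)$ $$ds^2=-\alpha^2\,dt^2+\delta_{ij}\,(dx^i-\beta^i dt)(dx^j-\beta^j dt),$$ with lapse $\alpha\equiv 1$, flat time-independent spatial metric $\gamma_{ij}=\delta_{ij}$ on every slice $t=\text{const}$, and irrotational shift given by a smooth scalar potential $\Phi(t,x)$ through $\beta_i=-\partial_i\Phi$ (i.e. $\boldsymbol{\beta}^\flat=-d\Phi$ on each slice). Then the stress–energy tensor $T^\mu{}_\nu=G^\mu{}_\nu/\kappa$ of this spacetime is of Hawking–Ellis Type I at every point.
   Context: $G^\mu{}_\nu$ is the mixed Einstein tensor of the metric and $\kappa>0$ is Einstein's coupling constant (zero cosmological constant). A symmetric tensor $T_{\mu\nu}$ at a point, viewed as the linear map $T^\mu{}_\nu$, is of Hawking–Ellis Type I if $T^\mu{}_\nu$ has four real eigenvalues and admits a real timelike eigenvector, equivalently there is an orthonormal frame in which $T^{\hat\mu}{}_{\hat\nu}=\mathrm{diag}(-\varrho,p_1,p_2,p_3)$ with all entries real. *)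

(* Defs.v *)
From HB Require Import structures.
From mathcomp Require Import all_boot all_order all_algebra.
From mathcomp Require Import all_classical all_reals all_analysis.
Set Implicit Arguments. Unset Strict Implicit. Unset Printing Implicit Defensive.
Import Order.TTheory GRing.Theory Num.Theory.
Import numFieldNormedType.Exports.
Local Open Scope ring_scope.

(* Spacetime points are rows x = (t, x^1, x^2, x^3) : 'rV[R]_4; index 0 is t. *)

Section Geom.
Variable R : realType.
Notation pt := 'rV[R]_4.

Definition ev (mu : 'I_4) : pt := delta_mx 0 mu.

Definition pd (mu : 'I_4) (f : pt -> R) : pt -> R := fun x => 'D_(ev mu) f x.

Fixpoint ipd (s : seq 'I_4) (f : pt -> R) : pt -> R :=
  match s with [::] => f | mu :: s' => pd mu (ipd s' f) end.

Definition smooth (f : pt -> R) : Prop :=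
  forall (s : seq 'I_4) (x : pt), differentiable (ipd s f) x.

Definition sp (i : 'I_3) : 'I_4 := lift ord0 i.

(* 3+1 metric  ds^2 = -alpha^2 dt^2 + delta_ij (dx^i - beta^i dt)(dx^j - beta^j dt) *)
Definition adm_metric (alpha : pt -> R) (beta : pt -> 'I_3 -> R) (x : pt) : 'M[R]_4 :=
  let dt := fun mu : 'I_4 => (mu == ord0)%:R : R in
  let w := fun (i : 'I_3) (mu : 'I_4) => (mu == sp i)%:R - beta x i * dt mu in
  \matrix_(mu, nu) (- (alpha x ^+ 2) * dt mu * dt nu + \sum_(i < 3) w i mu * w i nu).

Variable g : pt -> 'M[R]_4.
Definition ginv (x : pt) : 'M[R]_4 := invmx (g x).

Definition christoffel (a b c : 'I_4) (x : pt) : R :=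
  2^-1 * \sum_(d < 4) ginv x a d *
    (pd b (fun y => g y d c) x + pd c (fun y => g y d b) x - pd d (fun y => g y b c) x).

Definition ricci (x : pt) : 'M[R]_4 :=
  \matrix_(b, d) \sum_(a < 4)
     (pd a (christoffel a d b) x - pd d (christoffel a a b) x
      + \sum_(e < 4) (christoffel a a e x * christoffel e d b x
                      - christoffel a d e x * christoffel e a b x)).

Definition ricci_scalar (x : pt) : R :=
  \sum_(a < 4) \sum_(b < 4) ginv x a b * ricci x a b.

Definition einstein_mixed (x : pt) : 'M[R]_4 :=
  ginv x *m ricci x - (2^-1 * ricci_scalar x) *: 1%:M.
End Geom.

Definition HE_typeI (R : realType) (gx T : 'M[R]_4) : Prop :=
  (exists r : 'I_4 -> R, char_poly T = \prod_(i < 4) ('X - (r i)%:P)) /\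
  (exists (v : 'cV[R]_4) (lam : R),
      (v^T *m gx *m v) ord0 ord0 < 0 /\ T *m v = lam *: v).

(* Main.v *)
Require Import Defs.
From HB Require Import structures.
From mathcomp Require Import all_boot all_order all_algebra.
From mathcomp Require Import all_classical all_reals all_analysis.
From mathcomp Require Import complex.
From mathcomp Require Import ring lra.
Import Order.TTheory GRing.Theory Num.Theory.
Import numFieldNormedType.Exports.
Local Open Scope classical_set_scope.
Local Open Scope ring_scope.
Section Herm.
Variable C : numClosedFieldType.
Local Notation cj := (@Num.conj C).

Lemma herm_eig_real n (A : 'M[C]_n) z (v : 'rV[C]_n) :
  A^T = A -> map_mx cj A = A -> v *m A = z *: v -> v != 0 -> z \is Num.real.
Proof.
move=> AT Ac hv vn0.
set vc := map_mx cj v.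
have e1 : vc *m A = cj z *: vc.
  by rewrite -{1}Ac -map_mxM hv map_mxZ.
set s := (v *m vc^T) 0 0.
have k1 : (v *m A *m vc^T) 0 0 = z * s by rewrite hv -scalemxAl mxE.
have k2 : (v *m A *m vc^T) 0 0 = cj z * s.
  have tr11 (X : 'M[C]_1) : X 0 0 = X^T 0 0 by rewrite mxE.
  rewrite tr11 !trmx_mul trmxK AT mulmxA e1 -scalemxAl mxE /s; congr (_ * _).
  by rewrite tr11 trmx_mul trmxK.
have sn0 : s != 0.
  have Hn : forall j : 'I_n, true -> 0 <= v 0 j * vc^T j 0.
    by move=> j _; rewrite !mxE; exact: mul_conjC_ge0.
  rewrite /s mxE; apply/negP => /eqP /(psumr_eq0P Hn) H.
  move/negP: vn0; apply; apply/eqP/rowP => j; rewrite mxE.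
  have /eqP := H j isT; rewrite !mxE.
  by rewrite mul_conjC_eq0 => /eqP.
apply/CrealP; apply: (mulIf sn0); by rewrite -k2 k1.
Qed.
End Herm.

Section Sym.
Variable R : realType.
Local Notation toC := (real_complex R).

Lemma sym_split n (M : 'M[R]_n) : M^T = M ->
  exists r : 'I_n -> R, char_poly M = \prod_(i < n) ('X - (r i)%:P).
Proof.
move=> MS.
set Mc := map_mx toC M.
have McT : Mc^T = Mc by rewrite /Mc map_trmx MS.
have Mcc : map_mx Num.conj Mc = Mc.
  by apply/matrixP => i j; rewrite !mxE; apply/CrealP/complex_realP; exists (M i j).
have [rs Hrs] := closed_field_poly_normal (char_poly Mc).
rewrite (monicP (char_poly_monic _)) scale1r in Hrs.
have rsR : forall z, z \in rs -> z \is Num.real.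
  move=> z zin; have : root (char_poly Mc) z by rewrite Hrs root_prod_XsubC.
  rewrite -eigenvalue_root_char => /eigenvalueP [v hv vn0].
  exact: herm_eig_real McT Mcc hv vn0.
pose rr := map (fun z => complex.Re z) rs.
have E : char_poly M = \prod_(a <- rr) ('X - a%:P).
  apply: (@map_poly_inj _ _ toC).
  rewrite map_char_poly -/Mc Hrs rmorph_prod big_map; apply: eq_big_seq => z zin.
  by rewrite rmorphB /= map_polyX map_polyC /= RRe_real ?rsR.
have Hsz : size rr = n.
  by have := size_char_poly M; rewrite E size_prod_XsubC => -[].
exists (fun i => nth 0 rr i).
rewrite E (big_nth 0) big_mkord.
by rewrite Hsz.
Qed.
End Sym.

Section Alg.
Variable R : realType.



Lemma char_poly_sim n (P B : 'M[R]_n) : P \in unitmx ->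
  char_poly (P *m B *m invmx P) = char_poly B.
Proof.
move=> Pu; rewrite /char_poly /char_poly_mx.
set Pp := map_mx polyC P; set Qp := map_mx polyC (invmx P).
have PQ : Pp *m Qp = 1%:M by rewrite -map_mxM mulmxV // map_mx1.
have -> : map_mx polyC (P *m B *m invmx P) = Pp *m map_mx polyC B *m Qp by rewrite !map_mxM.
have -> : ('X%:M : 'M[{poly R}]_n) - Pp *m map_mx polyC B *m Qp =
    Pp *m ('X%:M - map_mx polyC B) *m Qp.
  by rewrite mulmxBr mulmxBl scalar_mxC -[_ *m Pp *m Qp]mulmxA PQ mulmx1.
by rewrite !det_mulmx mulrAC -det_mulmx PQ det1 mul1r.
Qed.


Lemma char_poly_block (B : 'M[R]_4) : (forall i : 'I_3, B ord0 (lift ord0 i) = 0) ->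
  char_poly B = ('X - (B ord0 ord0)%:P) * char_poly (row' ord0 (col' ord0 B)).
Proof.
move=> H; rewrite /char_poly (expand_det_row _ ord0) big_ord_recl big1 ?addr0.
  rewrite /cofactor row'_col'_char_poly_mx /char_poly_mx !mxE /= expr0 mul1r.
  by rewrite mulr1n.
move=> j _; rewrite /char_poly_mx !mxE /= H mulr0n sub0r oppr0 mul0r.
by [].
Qed.

Lemma typeI_of (g T P B : 'M[R]_4) : P \in unitmx -> T *m P = P *m B ->
  (forall i : 'I_3, B ord0 (lift ord0 i) = 0) -> (forall i : 'I_3, B (lift ord0 i) ord0 = 0) ->
  (forall i j : 'I_3, B (lift ord0 i) (lift ord0 j) = B (lift ord0 j) (lift ord0 i)) ->
  (P^T *m g *m P) ord0 ord0 < 0 -> HE_typeI g T.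
Proof.
move=> Pu TP B0r B0c Bs neg; split.
  have TE : T = P *m B *m invmx P by rewrite -TP mulmxK.
  have [r Hr] := @sym_split _ _ (row' ord0 (col' ord0 B))
    (ltac:(by apply/matrixP => i j; rewrite !mxE Bs)).
  exists (fun k : 'I_4 => if (k : nat) == 0%N then B ord0 ord0 else r (inord k.-1)).
  rewrite TE char_poly_sim // char_poly_block // Hr big_ord_recl /=.
  congr (_ * _); apply: eq_bigr => i _ /=.
  by rewrite /bump /= inord_val.
exists (col ord0 P), (B ord0 ord0); split.
  move: neg; rewrite tr_col !mxE => neg; apply: le_lt_trans neg; rewrite le_eqVlt; apply/orP; left.
  apply/eqP; apply: eq_bigr => k _; rewrite !mxE; congr (_ * _); apply: eq_bigr => j _; rewrite !mxE.
  by [].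
have BE : B *m delta_mx ord0 (0 : 'I_1) = B ord0 ord0 *: delta_mx ord0 0.
  apply/matrixP => a j; rewrite -colE !mxE (ord1 j) eqxx andbT.
  case: (unliftP ord0 a) => [i ->|->]; last by rewrite eqxx mulr1.
  by rewrite B0c /= mulr0.
by rewrite colE mulmxA TP -mulmxA BE -scalemxAr.
Qed.


Definition eta : 'M[R]_4 := diag_mx (\row_(a < 4) (if a == ord0 then -1 else 1)).

Lemma typeI_gen (g Ric P : 'M[R]_4) (k c : R) :
  P^T *m g *m P = eta -> Ric^T = Ric ->
  (forall i : 'I_3, (P^T *m Ric *m P) (lift ord0 i) ord0 = 0) ->
  HE_typeI g (k *: (invmx g *m Ric - c *: 1%:M)).
Proof.
move=> H RS Q0.
have ee : eta *m eta = 1%:M.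
  apply/matrixP => a b; rewrite mul_diag_mx !mxE.
  case: (a == b); case: (a == ord0); rewrite /= ?mulr1n ?mulr0n ?mulr0 ?mulr1 //; ring.
have deta : \det eta = -1.
  by rewrite /eta det_diag big_ord_recl big_ord_recl big_ord_recl big_ord_recl big_ord0 !mxE /= !mulr1.
have detP : \det P != 0.
  apply/eqP => P0; move: (congr1 determinant H); rewrite !det_mulmx det_tr P0 deta ?mulr0 ?mul0r.
  by move=> /esym/eqP; rewrite oppr_eq0 oner_eq0.
have detg : \det g != 0.
  apply/eqP => P0; move: (congr1 determinant H); rewrite !det_mulmx P0 deta ?mulr0 ?mul0r.
  by move=> /esym/eqP; rewrite oppr_eq0 oner_eq0.
have Pu : P \in unitmx by rewrite unitmxE unitfE.
have gu : g \in unitmx by rewrite unitmxE unitfE.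
have PTu : P^T \in unitmx by rewrite unitmx_tr.
have ginvE : invmx g = P *m eta *m P^T.
  have E0 : P^T *m (g *m (P *m eta *m P^T)) = P^T *m 1%:M.
    by rewrite mulmx1 !mulmxA H ee mul1mx.
  have E1 : g *m (P *m eta *m P^T) = 1%:M.
    by have := congr1 (mulmx (invmx P^T)) E0; rewrite !mulKmx.
  by rewrite -[RHS]mul1mx -(mulVmx gu) -[invmx g *m g *m _]mulmxA E1 mulmx1.
set Q := P^T *m Ric *m P.
have QS : Q^T = Q by rewrite /Q !trmx_mul trmxK RS mulmxA.
have Qs a b : Q a b = Q b a by rewrite -{1}QS mxE.
have TP : k *: (invmx g *m Ric - c *: 1%:M) *m P = P *m (k *: (eta *m Q - c *: 1%:M)).
  rewrite ginvE -scalemxAl -scalemxAr mulmxBl mulmxBr; congr (_ *: (_ - _)).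
    by rewrite /Q !mulmxA.
  by rewrite -scalemxAl -scalemxAr mul1mx mulmx1.
have {}Q0 : forall i : 'I_3, Q (lift ord0 i) ord0 = 0 := Q0.
clearbody Q.
apply: (@typeI_of g _ P (k *: (eta *m Q - c *: 1%:M))) => //.
- move=> i; rewrite /eta mul_diag_mx !mxE /= Qs Q0 mulr0 mulr0n mulr0 subr0 mulr0.
  by [].
- move=> i; rewrite /eta mul_diag_mx !mxE /= Q0 mulr0 mulr0n mulr0 subr0 mulr0.
  by [].
- move=> i j; rewrite /eta mul_diag_mx !mxE /= Qs.
  by rewrite eq_sym.
- by rewrite H !mxE /= mulr1n ltrN10.
Qed.

End Alg.

Section Schwarz.
Variable R : realType.
Notation pt := 'rV[R]_4.

Lemma line_deriv (F : pt -> R) (p v : pt) (t : R) : derivable F (p + t *: v) v ->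
  is_derive t 1 (fun s => F (p + s *: v)) ('D_v F (p + t *: v)).
Proof.
move=> dF.
have E : (fun h : R => h^-1 *: (((fun s => F (p + s *: v)) \o shift t) (h *: 1) -
                                 (fun s => F (p + s *: v)) t))
  = (fun h : R => h^-1 *: ((F \o shift (p + t *: v)) (h *: v) - F (p + t *: v))).
  apply: funext => h /=; congr (_ *: (F _ - _)).
  rewrite scalerDl addrCA addrC (_ : h%:A = h) 1?addrC //; exact: mulr1.
apply: DeriveDef; first by rewrite /derivable E.
by rewrite /derive E.
Qed.


Lemma mvt_bound (g dg : R -> R) (a b K M : R) : a < b ->
  (forall s : R, is_derive s 1 g (dg s)) -> (forall s, a < s < b -> `|dg s - K| <= M) ->
  `|g b - g a - K * (b - a)| <= M * (b - a).
Proof.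
move=> ab gd bd.
have gc : {within `[a, b], continuous g}.
  apply: continuous_subspaceT => s; apply: differentiable_continuous; apply/derivable1_diffP.
  by have [] := gd s.
have [c cab ->] := MVT ab (fun s _ => gd s) gc.
have ba : 0 <= b - a by rewrite subr_ge0 ltW.
rewrite -mulrBl normrM (ger0_norm ba) ler_wpM2r //.
by apply: bd; move: cab; rewrite in_itv /= => /andP [-> ->].
Qed.

Lemma is_deriveB1 (g1 g2 : R -> R) d1 d2 (s : R) :
  is_derive s 1 g1 d1 -> is_derive s 1 g2 d2 -> is_derive s 1 (fun t => g1 t - g2 t) (d1 - d2).
Proof. move=> H1 H2; exact (is_deriveB H1 H2). Qed.

Lemma delta_est (f : pt -> R) (u w x : pt) (eps : R) :
  (forall y, differentiable f y) ->
  (forall y, differentiable (fun z => 'D_u f z) y) ->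
  differentiable (fun y => 'D_w (fun z => 'D_u f z) y) x ->
  0 < eps -> exists2 d, 0 < d & forall h, 0 < h < d ->
   `|f (x + h *: w + h *: u) - f (x + h *: u) - f (x + h *: w) + f x
      - 'D_w (fun z => 'D_u f z) x * h * h| <= eps * h * h.
Proof.
move=> Hf Hu Hwu e0.
set Du := fun z => 'D_u f z.
set c := 'D_w Du x.
have := differentiable_continuous Hwu.
move=> /cvgrPdist_lt /(_ eps e0) /nbhs_normP [r r0 Hr].
set k := `|u| + `|w| + 1.
have k0 : 0 < k by have := normr_ge0 u; have := normr_ge0 w; rewrite /k; timeout 20 lra.
exists (r / k); first by rewrite divr_gt0.
move=> h /andP [h0 hd].
have hk : h * k < r by rewrite -ltr_pdivlMr.
have near s t : 0 <= s <= h -> 0 <= t <= h -> `|'D_w Du (x + s *: u + t *: w) - c| <= eps.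
  move=> /andP [s0 sh] /andP [t0 th].
  apply/ltW; rewrite distrC; apply: (Hr (x + s *: u + t *: w)).
  rewrite /ball_ /= -addrA opprD addrA subrr add0r normrN.
  apply: (le_lt_trans (ler_normD _ _)); rewrite !normrZ !ger0_norm //.
  have := ler_wpM2r (normr_ge0 u) sh; have := ler_wpM2r (normr_ge0 w) th.
  move: hk; rewrite /k; timeout 20 lra.
have inner s : 0 <= s <= h ->
    `|Du (x + s *: u + h *: w) - Du (x + s *: u) - c * h| <= eps * h.
  move=> sh.
  suff: `|(fun t => Du (x + s *: u + t *: w)) h - (fun t => Du (x + s *: u + t *: w)) 0
          - c * (h - 0)| <= eps * (h - 0).
    by rewrite /= scale0r addr0 !subr0.
  apply: (@mvt_bound (fun t => Du (x + s *: u + t *: w))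
     (fun t => 'D_w Du (x + s *: u + t *: w)) 0 h c eps h0) => [t|t /andP [t0 th]].
    exact: line_deriv (diff_derivable (Hu _)).
  by apply: near => //; rewrite ?ltW.
suff: `|(fun s => f (x + h *: w + s *: u) - f (x + s *: u)) h
        - (fun s => f (x + h *: w + s *: u) - f (x + s *: u)) 0 - (c * h) * (h - 0)|
        <= (eps * h) * (h - 0).
  rewrite /= !scale0r !addr0 !subr0.
  have -> : f (x + h *: w + h *: u) - f (x + h *: u) - (f (x + h *: w) - f x) - c * h * h =
            f (x + h *: w + h *: u) - f (x + h *: u) - f (x + h *: w) + f x - c * h * h.
    by timeout 20 ring.
  by [].
apply: (@mvt_bound (fun s => f (x + h *: w + s *: u) - f (x + s *: u))
   (fun s => Du (x + h *: w + s *: u) - Du (x + s *: u)) 0 h (c * h) (eps * h) h0)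
   => [t|t /andP [t0 th]].
  by apply: is_deriveB1; exact: line_deriv (diff_derivable (Hf _)).
rewrite /=.
have -> : x + h *: w + t *: u = x + t *: u + h *: w by rewrite addrAC.
by apply: inner; rewrite !ltW.
Qed.


Lemma half_sum (a b e h : R) : a <= e / 2 * h * h -> b <= e / 2 * h * h -> a + b <= e * (h * h).
Proof. lra. Qed.

Lemma schwarz_gen (f : pt -> R) (u w x : pt) :
  (forall y, differentiable f y) ->
  (forall y, differentiable (fun z => 'D_u f z) y) ->
  (forall y, differentiable (fun z => 'D_w f z) y) ->
  differentiable (fun y => 'D_w (fun z => 'D_u f z) y) x ->
  differentiable (fun y => 'D_u (fun z => 'D_w f z) y) x ->
  'D_w (fun z => 'D_u f z) x = 'D_u (fun z => 'D_w f z) x.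
Proof.
move=> Hf Hu Hw H1 H2.
apply/eqP; rewrite -subr_eq0 -normr_le0.
apply/ler_addgt0Pr => e e0.
have e20 : 0 < e / 2 by rewrite divr_gt0.
have [d1 d10 D1] := @delta_est f u w x (e / 2) Hf Hu H1 e20.
have [d2 d20 D2] := @delta_est f w u x (e / 2) Hf Hw H2 e20.
set h := Num.min d1 d2 / 2.
have hm0 : 0 < Num.min d1 d2 by rewrite lt_min d10 d20.
have h0 : 0 < h by rewrite divr_gt0.
have hlt : h < Num.min d1 d2 by rewrite /h ltr_pdivrMr // ltr_pMr // ltr1n.
have h1 : h < d1 by apply: (lt_le_trans hlt); rewrite ge_min lexx.
have h2 : h < d2 by apply: (lt_le_trans hlt); rewrite ge_min lexx orbT.
have {D1} := D1 h (ltac:(by rewrite h0 h1)).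
have {D2} := D2 h (ltac:(by rewrite h0 h2)).
rewrite (addrAC x (h *: u)).
set A := f _; set B := f _; set C := f _; set D := f x.
set c1 := 'D_w _ x; set c2 := 'D_u _ x.
move=> D2 D1.
have hh : 0 < h * h by rewrite mulr_gt0.
rewrite add0r -(ler_pM2r hh) -(ger0_norm (ltW hh)) -normrM (ger0_norm (ltW hh)).
have -> : (c1 - c2) * (h * h) = (A - B - C + D - c2 * h * h) - (A - C - B + D - c1 * h * h) by ring.
apply: (le_trans (ler_normB _ _)).

exact: half_sum D2 D1.
Qed.


Lemma schwarz (f : pt -> R) a b : smooth f -> pd a (pd b f) = pd b (pd a f).
Proof.
move=> Hs; apply: funext => x.
exact (@schwarz_gen f (@ev R b) (@ev R a) x (Hs [::]) (Hs [:: b]) (Hs [:: a]) (Hs [:: a; b] x)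
  (Hs [:: b; a] x)).
Qed.

End Schwarz.

Section S.
Variable R : realType.
Notation pt := 'rV[R]_4.
Definition o1 : 'I_3 := @Ordinal 3 1 isT.
Definition o2 : 'I_3 := @Ordinal 3 2 isT.
Notation o0 := (ord0 : 'I_3).
Notation i0 := (ord0 : 'I_4).
Notation i1 := (sp o0).
Notation i2 := (sp o1).
Notation i3 := (sp o2).

Lemma sum4 (f : 'I_4 -> R) : \sum_(a<4) f a = f i0 + f i1 + f i2 + f i3.
Proof.
rewrite !big_ord_recl big_ord0 addr0 !addrA; congr (_+_+_+_); congr f; exact: val_inj.
Qed.
Lemma sum3 (f : 'I_3 -> R) : \sum_(a<3) f a = f o0 + f o1 + f o2.
Proof.
rewrite !big_ord_recl big_ord0 addr0 !addrA; congr (_+_+_); congr f; exact: val_inj.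
Qed.
Lemma I4cases (a : 'I_4) : a = i0 \/ a = i1 \/ a = i2 \/ a = i3.
Proof.
case: a => [[|[|[|[|n]]]] H]; [left|right;left|right;right;left|right;right;right|by []];
  exact: val_inj.
Qed.

Fact pd_key : unit. Proof. by []. Qed.
Definition pdo : 'I_4 -> (pt -> R) -> pt -> R := locked_with pd_key (@pd R).
Lemma pdoE : pdo = @pd R. Proof. by rewrite /pdo; case: pd_key. Qed.

Definition hasD (m : 'I_4) (y : pt) (f : pt -> R) (df : R) :=
  differentiable f y /\ pdo m f y = df.

Lemma hasD_cst m y (c : R) : hasD m y (fun _ => c) 0.
Proof. rewrite /hasD pdoE; split; first exact: differentiable_cst. exact: derive_cst. Qed.

Lemma hasD_add m y f g a b : hasD m y f a -> hasD m y g b ->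
  hasD m y (fun z => f z + g z) (a + b).
Proof.
rewrite /hasD pdoE; move=> [df <-] [dg <-]; split; first exact: differentiableD.
rewrite /pd; exact (deriveD (diff_derivable df) (diff_derivable dg)).
Qed.

Lemma hasD_opp m y f a : hasD m y f a -> hasD m y (fun z => - f z) (- a).
Proof.
rewrite /hasD pdoE; move=> [df <-]; split; first exact: differentiableN.
rewrite /pd; exact (deriveN (diff_derivable df)).
Qed.

Lemma hasD_mul m y f g a b : hasD m y f a -> hasD m y g b ->
  hasD m y (fun z => f z * g z) (f y * b + g y * a).
Proof.
rewrite /hasD pdoE; move=> [df <-] [dg <-]; split; first exact: differentiableM.
rewrite /pd; exact (deriveM (diff_derivable df) (diff_derivable dg)).
Qed.

Lemma hasD_atom m y f : differentiable f y -> hasD m y (fun z => f z) (pdo m f y).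
Proof. by move=> df; split. Qed.

Lemma hasD_ext m y f a b : hasD m y f a -> a = b -> hasD m y f b.
Proof. by move=> h <-. Qed.
Lemma hasD_pd m y f df : hasD m y f df -> pdo m f y = df.
Proof. by case. Qed.

Lemma pd_via m y (f g : pt -> R) dg : (forall z, f z = g z) -> hasD m y g dg -> pdo m f y = dg.
Proof. by move=> e [_ <-]; congr pdo; apply: funext. Qed.

Lemma pd_ext m y (f g : pt -> R) : (forall z, f z = g z) -> pdo m f y = pdo m g y.
Proof. by move=> e; congr pdo; apply: funext. Qed.


Lemma ipd_rcons s c (f : pt -> R) : ipd (rcons s c) f = ipd s (pd c f).
Proof. by elim: s => //= m s ->. Qed.

Lemma smooth_pd (f : pt -> R) c : smooth f -> smooth (pd c f).
Proof. by move=> Hf s x; have := Hf (rcons s c) x; rewrite ipd_rcons. Qed.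




Lemma schwarzo (f : pt -> R) a b : smooth f -> pdo a (pdo b f) = pdo b (pdo a f).
Proof. by rewrite pdoE; apply: schwarz. Qed.
Lemma smooth_pdo (f : pt -> R) c : smooth f -> smooth (pdo c f).
Proof. by rewrite pdoE; apply: smooth_pd. Qed.

Variable Phi : pt -> R.
Hypothesis Hs : smooth Phi.

Definition D2 (m n : 'I_4) (y : pt) : R :=
  if (m <= n)%N then pdo m (pdo n Phi) y else pdo n (pdo m Phi) y.

Definition D3 (m a b : 'I_4) (y : pt) : R :=
  if (m <= a)%N then
    (if (a <= b)%N then pdo m (pdo a (pdo b Phi)) y
     else if (m <= b)%N then pdo m (pdo b (pdo a Phi)) y else pdo b (pdo m (pdo a Phi)) y)
  else
    (if (m <= b)%N then pdo a (pdo m (pdo b Phi)) y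
     else if (a <= b)%N then pdo a (pdo b (pdo m Phi)) y else pdo b (pdo a (pdo m Phi)) y).

Lemma D2E m n y : pdo m (pdo n Phi) y = D2 m n y.
Proof. by rewrite /D2; case: ifP => _; [exact: erefl|]; rewrite (schwarzo _ _ _ Hs). Qed.

Lemma D3E m a b y : pdo m (pdo a (pdo b Phi)) y = D3 m a b y.
Proof.
have S1 p q r : pdo p (pdo q (pdo r Phi)) = pdo q (pdo p (pdo r Phi)).
  exact: (schwarzo _ _ _ (smooth_pdo _ _ Hs)).
have S2 p q r : pdo p (pdo q (pdo r Phi)) = pdo p (pdo r (pdo q Phi)).
  by rewrite (schwarzo _ _ _ Hs).
rewrite /D3; case: ifP => _; case: ifP => _; try case: ifP => _.
- exact: erefl.
- by rewrite S2.
- by rewrite S2 S1.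
- by rewrite S1.
- by rewrite S1 S2.
- by rewrite S1 S2 S1.
Qed.

Lemma hasD_atom1 m n y : hasD m y (fun z => pdo n Phi z) (D2 m n y).
Proof. by rewrite -D2E; apply: hasD_atom; rewrite pdoE; exact: (Hs [:: _] _). Qed.

Lemma hasD_atom2 m a b y : hasD m y (fun z => pdo a (pdo b Phi) z) (D3 m a b y).
Proof. by rewrite -D3E; apply: hasD_atom; rewrite pdoE; exact: (Hs [:: _; _] _). Qed.


Lemma hasD_D2 k m n y : hasD k y (fun z => D2 m n z) (D3 k m n y).
Proof.
have -> : (fun z => D2 m n z) = (fun z => pdo m (pdo n Phi) z) by apply: funext => z; rewrite D2E.
exact: hasD_atom2.
Qed.

Ltac dtac := lazymatch goal with
 | |- hasD _ _ (fun z => @?f z + @?g z) _ => apply: (@hasD_add _ _ f g); [dtac|dtac]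
 | |- hasD _ _ (fun z => - @?f z) _ => apply: (@hasD_opp _ _ f); dtac
 | |- hasD _ _ (fun z => @?f z * @?g z) _ => apply: (@hasD_mul _ _ f g); [dtac|dtac]
 | |- hasD _ _ (fun z => pdo _ (pdo _ Phi) z) _ => apply: hasD_atom2
 | |- hasD _ _ (fun z => pdo _ Phi z) _ => apply: hasD_atom1
 | |- hasD _ _ (fun z => D2 _ _ z) _ => apply: hasD_D2
 | |- _ => apply: hasD_cst
end.

Ltac gring := repeat match goal with |- context [pdo ?m ?f ?y] => generalize (pdo m f y); intro end;
  first [ring | field; rewrite ?pnatr_eq0 //].

Definition gm := adm_metric (fun _ => 1) (fun x i => - pd (sp i) Phi x).

Notation d_ a b := ((a == b)%:R : R).

Definition S3 (f : 'I_3 -> R) : R := f o0 + f o1 + f o2.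
Definition DG (m a b : 'I_4) (y : pt) : R :=
  S3 (fun i => (D2 m (sp i) y * d_ a i0) * (d_ b (sp i) + pdo (sp i) Phi y * d_ b i0)
    + (d_ a (sp i) + pdo (sp i) Phi y * d_ a i0) * (D2 m (sp i) y * d_ b i0)).

Lemma dG m a b y : pdo m (fun z => gm z a b) y = DG m a b y.
Proof.
erewrite pd_ext; last first.
  move=> z; rewrite /gm /adm_metric mxE sum3 -pdoE; reflexivity.
erewrite hasD_pd; last by dtac.
rewrite /DG /S3; cbv beta; move: (D2 m (sp o0) y) (D2 m (sp o1) y) (D2 m (sp o2) y) => *. gring.
Qed.

Notation E a := (d_ a i0).
Definition u (i : 'I_3) (y : pt) := pdo (sp i) Phi y.
Definition U (a : 'I_4) (y : pt) : R := S3 (fun i => d_ a (sp i) * u i y).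
Definition Gi (y : pt) : 'M[R]_4 := \matrix_(a, b)
  (- E a * E b + E a * U b y + U a y * E b + S3 (fun i => d_ a (sp i) * d_ b (sp i))
   - U a y * U b y).

Ltac c4 a := let H := fresh in have [H|[H|[H|H]]] := I4cases a; rewrite {a}H.

Lemma ginvE y : ginv gm y = Gi y.
Proof.
have H : gm y *m Gi y = 1%:M.
  apply/matrixP => a b; rewrite !mxE sum4 /gm /adm_metric /Gi /U /u /S3 !mxE !sum3 -pdoE.
  c4 a; c4 b; rewrite /=; gring.
rewrite /ginv.
by rewrite -[Gi y]mul1mx -(mulVmx (mulmx1_unit H).1) -mulmxA H mulmx1.
Qed.

Definition A (i j : 'I_3) (y : pt) : R := D2 (sp i) (sp j) y.
Definition w (k : 'I_3) (y : pt) : R := D2 i0 (sp k) y.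
Definition N (b : 'I_4) (i : 'I_3) (y : pt) : R := d_ b (sp i) + E b * u i y.
Definition L (b c : 'I_4) (y : pt) : R :=
  S3 (fun i => S3 (fun j => N b i y * N c j y * A i j y)).
Definition M (a : 'I_4) (y : pt) : R :=
  S3 (fun k => d_ a (sp k) * (w k y - S3 (fun l => A k l y * u l y))).
Definition chr (a b c : 'I_4) (y : pt) : R := - (E a - U a y) * L b c y + M a y * E b * E c.

Lemma chrE : christoffel gm = chr.
Proof.
apply: funext => a; apply: funext => b; apply: funext => c; apply: funext => y.
rewrite /christoffel sum4 ginvE -pdoE !dG.
rewrite /chr /Gi /DG /L /M /N /U /A /w /u /S3 !mxE.
c4 a; c4 b; c4 c; rewrite /= /D2 /=; gring.
Qed.

Lemma D2C m n y : D2 m n y = D2 n m y.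
Proof.
rewrite /D2; case: (ltngtP m n) => h.
- by [].
- by [].
- by have -> : m = n by apply: val_inj.
Qed.

Lemma chrC a b c : chr a b c = chr a c b.
Proof.
apply: funext => y; rewrite /chr /L /S3 /A.
rewrite (D2C (sp o1) (sp o0)) (D2C (sp o2) (sp o0)) (D2C (sp o2) (sp o1)).
move: (D2 _ _ _) (D2 _ _ _) (D2 _ _ _) (D2 _ _ _) (D2 _ _ _) (D2 _ _ _) => *.
rewrite /N; move: (u _ _) (u _ _) (u _ _) => *.
ring.
Qed.

Lemma trace0 b y : \sum_(a < 4) chr a a b y = 0.
Proof.
rewrite sum4; c4 b; rewrite /chr /L /M /N /U /A /w /u /S3 /= /D2 /=; gring.
Qed.

Lemma chr_diff a b c y : differentiable (chr a b c) y.
Proof.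
have [df [H _]] : exists df, hasD i0 y (chr a b c) df.
  by eexists; rewrite /chr /L /M /N /U /A /w /u /S3; cbv beta; dtac.
exact: H.
Qed.



Definition Ric' (x : pt) (b d : 'I_4) : R :=
  \sum_(a < 4) pdo a (chr a d b) x - \sum_(a < 4) \sum_(e < 4) chr a d e x * chr e a b x.

Lemma ricciE x b d : ricci gm x b d = Ric' x b d.
Proof.
rewrite /ricci mxE chrE -pdoE.
have H1 : \sum_(a < 4) pdo d (chr a a b) x = 0.
  have K : hasD d x (fun z => chr i0 i0 b z + chr i1 i1 b z + chr i2 i2 b z + chr i3 i3 b z)
     (pdo d (chr i0 i0 b) x + pdo d (chr i1 i1 b) x + pdo d (chr i2 i2 b) x + pdo d (chr i3 i3 b) x).
    apply: hasD_add; [apply: hasD_add; [apply: hasD_add|]|];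
      apply: hasD_atom; apply: chr_diff.
  rewrite sum4 -(hasD_pd _ _ _ _ K) (@pd_ext d x _ (fun _ => 0)); first exact: hasD_pd _ _ _ _ (hasD_cst _ _ _).
  by move=> z; have := trace0 b z; rewrite sum4.
have H2 : \sum_(a < 4) \sum_(e < 4) chr a a e x * chr e d b x = 0.
  by rewrite exchange_big; apply: big1 => e _; rewrite -mulr_suml trace0 mul0r.
rewrite big_split /= sumrB H1 subr0.
under eq_bigr => a _ do rewrite sumrB.
by rewrite sumrB H2 sub0r.
Qed.

Lemma Ric'C x b d : Ric' x b d = Ric' x d b.
Proof.
rewrite /Ric'; congr (_ - _).
  by apply: eq_bigr => a _; rewrite chrC.
rewrite exchange_big; apply: eq_bigr => a _; apply: eq_bigr => e _.
by rewrite (chrC e d a) (chrC a e b) mulrC.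
Qed.

Ltac pdchr := match goal with |- context [pdo ?m (chr ?a ?b ?c) ?y] =>
   erewrite (@pd_via m y (chr a b c));
   [ | move=> z; rewrite /chr /L /M /N /U /A /w /u /S3 /=; reflexivity | dtac ] end.

Lemma I3cases (i : 'I_3) : i = o0 \/ i = o1 \/ i = o2.
Proof.
case: i => [[|[|[|n]]] H]; [left|right;left|right;right|by []]; exact: val_inj.
Qed.

Lemma mom x (i : 'I_3) : Ric' x (sp i) i0 -
  (u o0 x * Ric' x (sp i) i1 + u o1 x * Ric' x (sp i) i2 + u o2 x * Ric' x (sp i) i3) = 0.
Proof.
rewrite /Ric' !sum4.
have [->|[->|->]] := I3cases i; repeat pdchr;
  rewrite /chr /L /M /N /U /A /w /u /S3 /= /D2 /D3 /=; gring.
Qed.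

Definition Pm (x : pt) : 'M[R]_4 := \matrix_(a, b) (d_ a b - d_ b i0 * U a x).

Lemma PgP x : (Pm x)^T *m gm x *m Pm x = eta R.
Proof.
apply/matrixP => a b.
rewrite /gm /adm_metric /eta /Pm /U /u /S3 -pdoE.
rewrite !mxE !sum4 !mxE !sum4 !mxE !sum3.
c4 a; c4 b; rewrite /=; gring.
Qed.

Lemma ricci_sym x : (ricci gm x)^T = ricci gm x.
Proof. by apply/matrixP => a b; rewrite mxE !ricciE Ric'C. Qed.

Lemma mom_P x (i : 'I_3) : ((Pm x)^T *m ricci gm x *m Pm x) (lift ord0 i) ord0 = 0.
Proof.
rewrite !mxE !sum4 !mxE !sum4 !ricciE /Pm !mxE /U /S3.
transitivity (Ric' x (sp i) i0 -
  (u o0 x * Ric' x (sp i) i1 + u o1 x * Ric' x (sp i) i2 + u o2 x * Ric' x (sp i) i3));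
  last exact: mom.
have [->|[->|->]] := I3cases i; rewrite /=;
  repeat match goal with |- context [Ric' ?x ?a ?b] => generalize (Ric' x a b); intro end;
  rewrite /u; gring.
Qed.

End S.


Theorem proposition2 (R : realType) (kappa : R) (Phi : 'rV[R]_4 -> R) :
  0 < kappa -> smooth Phi ->
  let g := adm_metric (fun _ => 1) (fun x i => - pd (sp i) Phi x) in
  forall x : 'rV[R]_4,
    HE_typeI (g x) (kappa^-1 *: einstein_mixed g x).
Proof.
move=> _ Hs g x.
rewrite /einstein_mixed /ginv.
have := @typeI_gen R (g x) (ricci g x) (Pm R Phi x) kappa^-1 (2^-1 * ricci_scalar g x).
apply.
- exact: PgP R Phi x.
- exact: ricci_sym R Phi Hs x.
- exact: mom_P R Phi Hs x.
Qed.
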